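(* Let $D$ be a connected locally semicomplete digraph in which no inclusion-wise maximal weak hub is mixed. Then either $D$ is semicomplete with a universal vertex, or there exist $k\ge 2$ pairwise disjoint sets $X_1,\dots,X_k$ partitioning $V(D)$ such that each $D[X_i]$ is strongly connected and the digraph obtained by contracting every $X_i$ (vertices $X_1,\dots,X_k$, arc $X_iX_j$ for $i\ne j$ whenever $D$ has an arc from $X_i$ to $X_j$) is a round oriented graph.
   Context: Digraphs are finite, no loops, no parallel arcs; digons allowed; an oriented graph has no digon. $x^+$, $x^-$ are out- and in-neighbourhoods. Connected means the underlying undirected graph is connected. Semicomplete: any two distinct vertices joined by at least one arc; locally semicomplete: every $x^+$ and every $x^-$ induces a semicomplete digraph. A universal vertex is $x$ with $x^+=x^-=V(D)\setminus\{x\}$. A weak hub is a set $X\subseteq V(D)$ with $D[X]$ strongly connected such that some vertex $x$ satisfies $X\subseteq x^-\setminus x^+$ or $X\subseteq x^+\setminus x^-$. A weak hub $X$ is mixed if there exist $x\notin X$ and $u,v\in X$ such that $xu$ and $vx$ are arcs. An oriented graph is round if there is a cyclic order of its vertices such that for every arc $xy$ and every vertex $z$ strictly between $x$ and $y$ going forward from $x$ to $y$ in the cyclic order, both $xz$ and $zy$ are arcs. *)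

(* Defs.v *)
(* A digraph is a finite vertex type V with an arc relation
   arc : rel V that is irreflexive (no loops); parallel arcs are impossible,
   digons (arc x y && arc y x) are allowed. *)
From mathcomp Require Import all_boot fingroup perm.
Set Implicit Arguments. Unset Strict Implicit. Unset Printing Implicit Defensive.

Section Digraphs.
Variable V : finType.
Variable arc : rel V.

Definition loopless : Prop := forall x, ~~ arc x x.

Definition dconnected : Prop :=
  0 < #|V| /\ forall x y, connect (fun a b => arc a b || arc b a) x y.

Definition strong_in (X : {set V}) : Prop :=
  X != set0 /\
  forall x y, x \in X -> y \in X ->
    connect (fun a b => [&& arc a b, a \in X & b \in X]) x y.

Definition outN (x : V) : {set V} := [set y | arc x y].
Definition inN (x : V) : {set V} := [set y | arc y x].

Definition semicomplete_on (S : {set V}) : Prop :=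
  forall y z, y \in S -> z \in S -> y != z -> arc y z || arc z y.

Definition semicomplete : Prop := semicomplete_on [set: V].

Definition locally_semicomplete : Prop :=
  forall x, semicomplete_on (outN x) /\ semicomplete_on (inN x).

Definition universal (x : V) : Prop :=
  forall y, y != x -> arc x y && arc y x.

Definition weak_hub (X : {set V}) : Prop :=
  strong_in X /\
  exists x, X \subset inN x :\: outN x \/ X \subset outN x :\: inN x.

Definition maximal_weak_hub (X : {set V}) : Prop :=
  weak_hub X /\ forall Y, weak_hub Y -> X \subset Y -> Y = X.

Definition mixed (X : {set V}) : Prop :=
  exists x u v, [/\ x \notin X, u \in X, v \in X, arc x u & arc v x].

End Digraphs.

Definition contraction (V : finType) (arc : rel V) (k : nat)
    (X : 'I_k -> {set V}) : rel 'I_k :=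
  fun i j => (i != j) && [exists a in X i, exists b in X j, arc a b].

Definition oriented (T : finType) (r : rel T) : Prop :=
  forall x y, ~~ (r x y && r y x).

(* cyclic order on 'I_k given by a bijection pos : positions 0..k-1 around the
   cycle; z strictly between x and y going forward from x to y *)
Definition cyc_between (k : nat) (pos : {perm 'I_k}) (x y z : 'I_k) : bool :=
  (0 < (pos z + k - pos x) %% k) && ((pos z + k - pos x) %% k < (pos y + k - pos x) %% k).

Definition round (k : nat) (r : rel 'I_k) : Prop :=
  oriented r /\
  exists pos : {perm 'I_k}, forall x y z,
    r x y -> cyc_between pos x y z -> r x z && r z y.

Definition is_partition (V : finType) (k : nat) (X : 'I_k -> {set V}) : Prop :=
  (forall i j, i != j -> [disjoint X i & X j]) /\
  (forall v : V, exists i, v \in X i).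

(* Main.v *)
Require Import Defs.
From mathcomp Require Import all_boot fingroup perm.
From Stdlib Require Import Classical ClassicalEpsilon.
Set Implicit Arguments. Unset Strict Implicit. Unset Printing Implicit Defensive.

Lemma conn_fwd (T : finType) (e : rel T) (Q : T -> Prop) s t :
  connect e s t -> Q s -> (forall a b, e a b -> Q a -> Q b) -> Q t.
Proof.
move/connectP=> [p Hp ->]; elim: p s Hp => //= b p IH s /andP[esb Hp] Qs st.
exact: (IH b Hp (st _ _ esb Qs) st).
Qed.

Lemma conn_bwd (T : finType) (e : rel T) (Q : T -> Prop) s t :
  connect e s t -> Q t -> (forall a b, e a b -> Q b -> Q a) -> Q s.
Proof.
move/connectP=> [p Hp ->]; elim: p s Hp => //= b p IH s /andP[esb Hp] Qt st.
exact: (st _ _ esb (IH b Hp Qt st)).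
Qed.

Lemma ext_perm (T : finType) (D : {set T}) (f : T -> T) :
  {in D &, injective f} -> exists p : {perm T}, {in D, forall x, p x = f x}.
Proof.
move=> finj.
set I := f @: D.
have cI : #|~: D| = #|~: I| by apply/eqP; rewrite -(eqn_add2l #|D|) cardsC -{1}(card_in_imset finj) cardsC.
pose q x := if x \in D then f x else nth x (enum (~: I)) (index x (enum (~: D))).
have qnD x : x \notin D -> q x \in ~: I.
  move=> xD; rewrite /q (negbTE xD) -mem_enum; apply: mem_nth.
  by rewrite -cardE -cI cardE index_mem mem_enum inE.
have qinj : injective q.
  move=> x y; case xD: (x \in D); case yD: (y \in D).
  - by rewrite /q xD yD; apply: finj.
  - move=> E; have := qnD y (negbT yD); rewrite -E /q xD inE.
    by rewrite (imset_f f xD).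
  - move=> E; have := qnD x (negbT xD); rewrite E /q yD inE.
    by rewrite (imset_f f yD).
  - rewrite /q xD yD => E.
    have ix : index x (enum (~: D)) < size (enum (~: I)).
      by rewrite -cardE -cI cardE index_mem mem_enum inE xD.
    have iy : index y (enum (~: D)) < size (enum (~: I)).
      by rewrite -cardE -cI cardE index_mem mem_enum inE yD.
    have := E; rewrite (set_nth_default x y iy) => E'.
    have /eqP := E'; rewrite (nth_uniq _ ix iy (enum_uniq _)) => /eqP Ei.
    have := congr1 (nth x (enum (~: D))) Ei.
    by rewrite !nth_index ?mem_enum ?inE ?xD ?yD.
exists (perm qinj) => x xD; by rewrite permE /q xD.
Qed.

Record goodR (T : finType) (r : rel T) : Prop := GoodR {
 g_irr : forall x, ~~ r x x;
 g_or : forall x y, r x y -> ~~ r y x;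
 g_lo : forall x a b, r x a -> r x b -> a != b -> r a b || r b a;
 g_li : forall x a b, r a x -> r b x -> a != b -> r a b || r b a;
 g_to : forall x a b c, r x a -> r x b -> r x c -> r a b -> r b c -> r c a -> False;
 g_ti : forall x a b c, r a x -> r b x -> r c x -> r a b -> r b c -> r c a -> False }.

Lemma source_ex (T : finType) (r : rel T) (G : goodR r) x a0 :
  r x a0 -> exists s, r x s /\ forall a, r x a -> a != s -> r s a.
Proof.
move=> ra0.
pose F s := #|[set b | r x b && r s b]|.
case: (@arg_maxnP T a0 (r x) F ra0) => s rxs smax.
exists s; split => // a rxa nas.
case/orP: (g_lo G rxa rxs nas) => // ras.
exfalso.
have : F s < F a.
  apply: proper_card; apply/properP; split.
    apply/subsetP => b; rewrite !inE => /andP[rxb rsb]; rewrite rxb /=.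
    have nab : a != b.
      apply/eqP => E; subst b; by move: (g_or G ras); rewrite rsb.
    case/orP: (g_lo G rxa rxb nab) => // rba.
    by case: (g_to G rxa rxs rxb ras rsb rba).
  by exists s; rewrite !inE ?rxs ?ras ?(negbTE (g_irr G s)) ?andbF.
by move=> lt; have := smax a rxa; rewrite /= leqNgt lt.
Qed.

Definition srcP (T : finType) (r : rel T) x s :=
  r x s && [forall a, r x a ==> (a != s) ==> r s a].

Definition src (T : finType) (r : rel T) x :=
  if [pick s | srcP r x s] is Some s then s else x.

Lemma src_spec (T : finType) (r : rel T) (G : goodR r) x a0 :
  r x a0 -> r x (src r x) /\ forall a, r x a -> a != src r x -> r (src r x) a.
Proof.
move=> ra0; rewrite /src; case: pickP.
  move=> s /andP[rxs /forallP H]; split => // a rxa nas.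
  by have := H a; rewrite rxa nas.
move=> none; case: (source_ex G ra0) => s [rxs Hs].
have := none s; rewrite /srcP rxs /=; move/negbT/negP; case.
by apply/forallP => a; apply/implyP => rxa; apply/implyP => nas; apply: Hs.
Qed.

Lemma perm_src (T : finType) (r : rel T) (G : goodR r) :
  exists p : {perm T}, forall w a, r w a ->
    r w (p w) /\ forall b, r w b -> b != p w -> r (p w) b.
Proof.
pose D := [set x | [exists a, r x a]].
have sD x : x \in D -> exists a, r x a by rewrite inE => /existsP.
have : {in D &, injective (src r)}.
  move=> x x' /sD[a ra] /sD[a' ra'] E.
  case: (src_spec G ra) => rx Hx; case: (src_spec G ra') => rx' Hx'.
  rewrite -E in rx' Hx'.
  apply/eqP; apply/negPn/negP => nxx'.
  case/orP: (g_li G rx rx' nxx') => [rxx' | rx'x].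
  - have nx's : x' != src r x.
      by apply/eqP => E'; move: (g_irr G x'); rewrite {2}E' rx'.
    by move: (g_or G (Hx x' rxx' nx's)); rewrite rx'.
  - have nxs : x != src r x.
      by apply/eqP => E'; move: (g_irr G x); rewrite {2}E' rx.
    by move: (g_or G (Hx' x rx'x nxs)); rewrite rx.
case/ext_perm => p Hp; exists p => w a rwa.
have wD : w \in D by rewrite inE; apply/existsP; exists a.
by rewrite Hp //; have := @src_spec T r G w a rwa.
Qed.

Lemma lemP (T : finType) (r : rel T) (G : goodR r) (p : {perm T}) :
  (forall w a, r w a -> r w (p w) /\ forall b, r w b -> b != p w -> r (p w) b) ->
  forall x y, r x y -> exists j, [/\ 0 < j, iter j p x = y &
     forall l, 0 < l < j -> r x (iter l p x) && r (iter l p x) y].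
Proof.
move=> Hp x y rxy.
pose S w := [set u | r w u && r u y].
have step : forall w, r w y -> (w = x \/ r x w) -> p w != y ->
    [/\ r x (p w), r (p w) y & #|S (p w)| < #|S w|].
  move=> w rwy wx pwy.
  case: (Hp _ _ rwy) => rwp Hs.
  have rpy : r (p w) y by apply: Hs => //; rewrite eq_sym.
  have rxp : r x (p w).
    case: wx => [E | rxw]; first by rewrite -E.
    have nxp : x != p w.
      by apply/eqP => E; move: (g_or G rxw); rewrite E rwp.
    case/orP: (g_li G rxy rpy nxp) => // rpx.
    by case: (g_ti G rxy rwy rpy rxw rwp rpx).
  split => //; apply: proper_card; apply/properP; split.
    apply/subsetP => u; rewrite !inE => /andP[rpu ruy]; rewrite ruy andbT.
    have nwu : w != u.
      by apply/eqP => E; move: rpu; rewrite -E (negbTE (g_or G rwp)).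
    case/orP: (g_li G rwy ruy nwu) => // ruw.
    by case: (g_ti G rwy rpy ruy rwp rpu ruw).
  by exists (p w); rewrite !inE ?rwp ?rpy ?(negbTE (g_irr G _)).
suff H : forall n i, #|S (iter i p x)| <= n ->
   r (iter i p x) y -> (iter i p x = x \/ r x (iter i p x)) ->
   (forall l, 0 < l <= i -> r x (iter l p x) && r (iter l p x) y) ->
   exists j, [/\ i < j, iter j p x = y &
     forall l, 0 < l < j -> r x (iter l p x) && r (iter l p x) y].
  have [|j [j0 jy jl]] := H _ 0 (leqnn _) rxy (or_introl erefl).
    by case.
  by exists j.
elim=> [|n IH] i cn rwy wx Hl.
  case E: (p (iter i p x) == y).
    exists i.+1; split; first by [].
      by rewrite iterS; apply/eqP.
    by move=> l /andP[l0 li]; apply: Hl; rewrite l0 -ltnS.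
  by case: (step _ rwy wx (negbT E)) => _ _; rewrite ltnNge (leq_trans cn).
case E: (p (iter i p x) == y).
  exists i.+1; split; first by [].
    by rewrite iterS; apply/eqP.
  by move=> l /andP[l0 li]; apply: Hl; rewrite l0 -ltnS.
case: (step _ rwy wx (negbT E)) => rxp rpy lt.
have [j [ij jy jl]] : exists j, [/\ i.+1 < j, iter j p x = y &
     forall l, 0 < l < j -> r x (iter l p x) && r (iter l p x) y].
  apply: IH; rewrite ?iterS //; first by rewrite -ltnS (leq_trans lt).
    by right.
  move=> l /andP[l0]; rewrite leq_eqVlt => /orP[/eqP -> | li].
    by rewrite iterS rxp rpy.
  by apply: Hl; rewrite l0 -ltnS.
by exists j; split => //; apply: ltnW.
Qed.

Lemma iter_mod (T : finType) (f : T -> T) x0 k m :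
  iter k f x0 = x0 -> iter m f x0 = iter (m %% k) f x0.
Proof.
move=> Hk; rewrite {1}(divn_eq m k) addnC iterD.
suff -> : iter (m %/ k * k) f x0 = x0 by [].
by elim: (m %/ k) => [|q IH] //=; rewrite mulSn iterD IH Hk.
Qed.

Lemma roundB k (r : rel 'I_k) : goodR r ->
  (forall x y, connect (fun a b => r a b || r b a) x y) -> round r.
Proof.
move=> G conn; split.
  by move=> x y; apply/negP => /andP[rxy ryx]; move: (g_or G rxy); rewrite ryx.
case: k r G conn => [|k'] r G conn.
  by exists 1%g => x; case: x.
set k := k'.+1.
have [p Hp] := perm_src G.
have P := lemP G Hp.
pose x0 : 'I_k := ord0.
have fc1 : forall a b, fconnect p a b.
  have sub : subrel (fun a b => r a b || r b a) (fconnect p).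
    move=> a b /orP[rab | rba].
      by have [j [_ <- _]] := P _ _ rab; apply: fconnect_iter.
    rewrite fconnect_sym; last exact: perm_inj.
    by have [j [_ <- _]] := P _ _ rba; apply: fconnect_iter.
  by move=> a b; apply: (connect_sub sub); apply: conn.
have ord_k : forall z, fingraph.order p z = k.
  move=> z; rewrite /fingraph.order -[in RHS](card_ord k); apply: eq_card => w.
  by rewrite inE fc1.
have fmax : forall z, findex p x0 z < k.
  by move=> z; rewrite -(ord_k x0); apply: findex_max; apply: fc1.
pose posf (z : 'I_k) : 'I_k := inord (findex p x0 z).
have posE : forall z, posf z = findex p x0 z :> nat.
  by move=> z; rewrite /posf inordK // fmax.
have posinj : injective posf.
  move=> a b E.
  rewrite -(iter_findex (fc1 x0 a)) -(iter_findex (fc1 x0 b)).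
  by rewrite -!posE E.
exists (perm posinj) => x y z rxy.
rewrite /cyc_between !permE !posE.
have Hk : iter k p x0 = x0 by have := iter_order (@perm_inj _ p) x0; rewrite ord_k.
have itE : forall w, iter ((findex p x0 w + k - findex p x0 x) %% k) p x = w.
  move=> w.
  rewrite -[X in iter _ p X = _](iter_findex (fc1 x0 x)) -iterD (iter_mod _ Hk) modnDml.
  have pxk : findex p x0 x <= findex p x0 w + k.
    by rewrite ltnW // ltn_addl // fmax.
  rewrite subnK // modnDr modn_small ?fmax //.
  exact: iter_findex (fc1 x0 w).
move=> /andP[e0 ed].
move: e0 ed (itE z) (itE y).
move: ((findex p x0 z + k - findex p x0 x) %% k) => e.
have dk : (findex p x0 y + k - findex p x0 x) %% k < k by rewrite ltn_mod.
move: dk; move: ((findex p x0 y + k - findex p x0 x) %% k) => d dk e0 ed ez dy.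
have [j [j0 jy jl]] := P _ _ rxy.
have ej : e < j.
  rewrite ltnNge; apply/negP => je.
  have jd : j < d by apply: leq_ltn_trans ed.
  have Hy : iter (d - j) p y = y.
    by rewrite -{1}jy -iterD subnK ?(ltnW jd) // dy.
  have := @findex_iter _ p y (d - j).
  rewrite ord_k Hy findex0 => H.
  have := H (leq_ltn_trans (leq_subr _ _) dk).
  by move/eqP; rewrite eq_sym subn_eq0 leqNgt jd.
by have := jl e; rewrite e0 ej ez; apply.
Qed.

Definition eIn (V : finType) (arc : rel V) (X : {set V}) :=
  fun a b => [&& arc a b, a \in X & b \in X].

Lemma cross (T : finType) (e : rel T) (P : pred T) s t :
  connect e s t -> P s -> ~~ P t -> exists a b, [/\ e a b, P a & ~~ P b].
Proof.
move/connectP=> [p Hp ->]; elim: p s Hp => /= [|b p IH] s.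
  by move=> _ ->.
move=> /andP[esb Hp] Ps Pt.
case Pb: (P b).
  exact: IH Hp Pb Pt.
by exists s, b; rewrite esb Ps Pb.
Qed.

Lemma connect_mono (V : finType) (arc : rel V) (X Z : {set V}) u w :
  X \subset Z -> connect (eIn arc X) u w -> connect (eIn arc Z) u w.
Proof.
move=> XZ; apply: connect_sub => a b /and3P[ab aX bX].
by apply: connect1; rewrite /eIn ab !(subsetP XZ).
Qed.

Lemma strong_hub (V : finType) (arc : rel V) (Z : {set V}) c :
  c \in Z -> (forall u, u \in Z -> connect (eIn arc Z) u c /\ connect (eIn arc Z) c u) ->
  strong_in arc Z.
Proof.
move=> cZ H; split; first by apply/set0Pn; exists c.
move=> x y xZ yZ; apply: (connect_trans (y := c)).
  by case: (H x xZ).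
by case: (H y yZ).
Qed.

Lemma A2 (V : finType) (arc : rel V) (X : {set V}) :
  locally_semicomplete arc -> strong_in arc X -> ~ mixed arc X ->
  forall y, y \notin X ->
  (forall u, u \in X -> arc u y -> forall a, a \in X -> arc a y && ~~ arc y a) /\
  (forall u, u \in X -> arc y u -> forall a, a \in X -> arc y a && ~~ arc a y).
Proof.
move=> Hls [_ HX] nm y yX; split => u uX Hu a aX.
- have ny : forall w, w \in X -> ~~ arc y w.
    move=> w wX; apply/negP => ayw; apply: nm; exists y, w, u; by split.
  rewrite (ny a aX) andbT.
  apply: (conn_fwd (Q := fun w => arc w y) (HX u a uX aX)) => // b c /and3P[bc bX cX] by'.
  have yc : y != c by apply/eqP => E; move: yX; rewrite E cX.
  case: (Hls b) => Ho _.
  have := Ho y c; rewrite !inE by' bc => /(_ isT isT yc) /orP[yc' | //].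
  by move: (ny c cX); rewrite yc'.
- have ny : forall w, w \in X -> ~~ arc w y.
    move=> w wX; apply/negP => awy; apply: nm; exists y, u, w; by split.
  rewrite (ny a aX) andbT.
  apply: (conn_bwd (Q := fun w => arc y w) (HX a u aX uX)) => // b c /and3P[bc bX cX] yc.
  have yb : b != y by apply/eqP => E; move: yX; rewrite -E bX.
  case: (Hls c) => _ Hi.
  have := Hi b y; rewrite !inE yc bc => /(_ isT isT yb) /orP[by' | //].
  by move: (ny b bX); rewrite by'.
Qed.

Lemma strongU (V : finType) (arc : rel V) (X Y : {set V}) v :
  strong_in arc X -> strong_in arc Y -> v \in X -> v \in Y -> strong_in arc (X :|: Y).
Proof.
move=> [_ HX] [_ HY] vX vY; apply: (strong_hub (c := v)); first by rewrite inE vX.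
move=> u; rewrite inE => /orP[uX | uY]; split.
- by apply: (connect_mono (subsetUl X Y)); apply: HX.
- by apply: (connect_mono (subsetUl X Y)); apply: HX.
- by apply: (connect_mono (subsetUr X Y)); apply: HY.
- by apply: (connect_mono (subsetUr X Y)); apply: HY.
Qed.

Lemma A3 (V : finType) (arc : rel V) (X Y : {set V}) v :
  locally_semicomplete arc ->
  maximal_weak_hub arc X -> ~ mixed arc X ->
  maximal_weak_hub arc Y -> v \in X -> v \in Y -> X = Y.
Proof.
move=> Hls [[sX wX] mX] nmX [hY mY] vX vY.
have [sY [z wz]] := hY.
have hX : weak_hub arc X by [].
case sYX: (Y \subset X).
  by apply: mY => //.
have [y1 y1Y y1X] : exists2 y1, y1 \in Y & y1 \notin X.
  by move/negbT: sYX => /subsetPn.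
have A := A2 Hls sX nmX.
have sU := strongU sX sY vX vY.
have fin : (X :|: Y) \subset Y -> X = Y.
  by move=> H; apply: esym; apply: mX => //; apply: subset_trans (subsetUl X Y) H.
case: sY => _ HY.
case: wz => wz.
- case zX: (z \in X).
    have [a [b [/and3P[ab aY bY] aX bX]]] := cross (P := fun w => w \in X) (HY v y1 vY y1Y) vX y1X.
    case/andP: ((A b bX).1 a aX ab z zX) => zb _.
    by have := subsetP wz b bY; rewrite !inE zb.
  have vz : arc v z by have := subsetP wz v vY; rewrite !inE => /andP[_].
  have Hz := (A z (negbT zX)).1 v vX vz.
  apply: fin; suff -> : X :|: Y = Y by [].
  apply: mY; last exact: subsetUr.
  split => //; exists z; left; apply/subsetP => w; rewrite inE => /orP[wX' | wY].
    by rewrite !inE; case/andP: (Hz w wX') => -> ->.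
  exact: subsetP wz w wY.
- case zX: (z \in X).
    have [a [b [/and3P[ab aY bY] aX bX]]] :
        exists a b, [/\ eIn arc Y a b, a \notin X & ~~ (b \notin X)].
      by apply: (cross (P := fun w => w \notin X) (HY y1 v y1Y vY)) => //; rewrite negbK.
    rewrite negbK in bX.
    case/andP: ((A a aX).2 b bX ab z zX) => _ nza.
    by have := subsetP wz a aY; rewrite !inE (negbTE nza) andbF.
  have vz : arc z v by have := subsetP wz v vY; rewrite !inE => /andP[_].
  have Hz := (A z (negbT zX)).2 v vX vz.
  apply: fin; suff -> : X :|: Y = Y by [].
  apply: mY; last exact: subsetUr.
  split => //; exists z; right; apply/subsetP => w; rewrite inE => /orP[wX' | wY].
    by rewrite !inE; case/andP: (Hz w wX') => -> ->.
  exact: subsetP wz w wY.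
Qed.

Lemma max_ex (V : finType) (arc : rel V) (X : {set V}) :
  weak_hub arc X -> exists Y, maximal_weak_hub arc Y /\ X \subset Y.
Proof.
suff H : forall n (X : {set V}), #|~: X| < n -> weak_hub arc X ->
    exists Y, maximal_weak_hub arc Y /\ X \subset Y.
  by apply: H; apply: ltnSn.
elim=> [|n IH] {}X //= cX hX.
case: (classic (maximal_weak_hub arc X)) => [mX | nmX].
  by exists X; split.
have [Y [hY' [XY nYX]]] : exists Y, weak_hub arc Y /\ X \subset Y /\ Y <> X.
  apply: NNPP => H; apply: nmX; split => // Y0 hY0 XY0.
  apply: NNPP => E; apply: H; exists Y0; by split; [|split].
have pXY : X \proper Y by rewrite properEneq XY andbT; apply/eqP => E; apply: nYX.
have [Z [mZ YZ]] : exists Z, maximal_weak_hub arc Z /\ Y \subset Z.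
  apply: IH hY'; rewrite -ltnS; apply: (leq_ltn_trans _ cX).
  by apply: proper_card; rewrite properC.
by exists Z; split => //; apply: subset_trans YZ.
Qed.

Lemma hub1 (V : finType) (arc : rel V) v w :
  (arc v w && ~~ arc w v) || (arc w v && ~~ arc v w) -> weak_hub arc [set v].
Proof.
move=> H; split.
  split; first by apply/set0Pn; exists v; rewrite inE.
  by move=> x y; rewrite !inE => /eqP -> /eqP ->; apply: connect0.
exists w; case/orP: H => /andP[a b]; [left | right];
  apply/subsetP => x; rewrite !inE => /eqP ->; by rewrite ?a ?b.
Qed.

Definition asb (P : Prop) : bool := if excluded_middle_informative P then true else false.

Lemma asbP (P : Prop) : reflect P (asb P).
Proof. by rewrite /asb; case: excluded_middle_informative => H; constructor. Qed.

Theorem lemma4p3 (V : finType) (arc : rel V) :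
  loopless arc ->
  dconnected arc ->
  locally_semicomplete arc ->
  (forall X : {set V}, maximal_weak_hub arc X -> ~ mixed arc X) ->
  (semicomplete arc /\ exists x, universal arc x) \/
  (exists (k : nat) (X : 'I_k -> {set V}),
     [/\ 2 <= k, is_partition X,
         forall i, strong_in arc (X i)
       & round (contraction arc X)]).
Proof.
move=> Hl [Vn0 Hcon] Hls Hnm.
have A2' : forall X, maximal_weak_hub arc X -> forall y, y \notin X ->
  (forall u, u \in X -> arc u y -> forall a, a \in X -> arc a y && ~~ arc y a) /\
  (forall u, u \in X -> arc y u -> forall a, a \in X -> arc y a && ~~ arc a y).
  by move=> X mX; apply: A2 Hls (mX.1.1) (Hnm X mX).
have [v0 _] : exists v0, v0 \in V by apply/card_gt0P.
case: (classic (exists v, forall X, maximal_weak_hub arc X -> v \notin X)) =>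
   [[w0 Ww0] | allin].
- left.
  pose W v := forall X, maximal_weak_hub arc X -> v \notin X.
  have dig : forall v w, W v -> arc v w -> arc w v.
    move=> v w Wv avw; case E: (arc w v) => //.
    have h : (arc v w && ~~ arc w v) || (arc w v && ~~ arc v w) by rewrite avw E.
    have [Y [mY sY]] := max_ex (hub1 h).
    by move: (Wv Y mY); rewrite (subsetP sY v) // inE.
  have dig' : forall v w, W v -> arc w v -> arc v w.
    move=> v w Wv awv; case E: (arc v w) => //.
    have h : (arc v w && ~~ arc w v) || (arc w v && ~~ arc v w) by rewrite awv E orbT.
    have [Y [mY sY]] := max_ex (hub1 h).
    by move: (Wv Y mY); rewrite (subsetP sY v) // inE.
  have clo : forall v u, W v -> arc v u || arc u v -> W u.
    move=> v u Wv vu X mX; apply/negP => uX.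
    have vX := Wv X mX.
    case/orP: vu => [avu | auv].
    + case/andP: ((A2' X mX v vX).2 u uX avu u uX) => _.
      by rewrite (dig v u Wv avu).
    + case/andP: ((A2' X mX v vX).1 u uX auv u uX) => _.
      by rewrite (dig' v u Wv auv).
  have Wall : forall x, W x.
    by move=> x; apply: (conn_fwd (Q := W) (Hcon w0 x)) => // a b ab Wa; apply: clo Wa ab.
  have adj : forall x y, y = x \/ arc x y.
    move=> x y; apply: (conn_fwd (Q := fun w => w = x \/ arc x w) (Hcon x y)); first by left.
    move=> a b ab [ax | xa].
      subst a; right; case/orP: ab => // bx; exact: dig' _ _ (Wall x) bx.
    case bx: (b == x); first by left; apply/eqP.
    right.
    have ab' : arc a b by case/orP: ab => // ba; exact: dig _ _ (Wall b) ba.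
    case: (Hls a) => Ho _.
    have := Ho x b; rewrite !inE (dig _ _ (Wall x) xa) ab' eq_sym bx => /(_ isT isT isT).
    by case/orP => // bx'; exact: dig _ _ (Wall b) bx'.
  split.
    move=> y z _ _ yz; case: (adj y z) => [E | -> //].
    by move: yz; rewrite E eqxx.
  exists v0 => y yv; case: (adj v0 y) => [E | a].
    by move: yv; rewrite E eqxx.
  by rewrite a (dig _ _ (Wall v0) a).
- right.
  have cover : forall v, exists X, maximal_weak_hub arc X /\ v \in X.
    move=> v; apply: NNPP => H; apply: allin; exists v => X mX.
    by apply/negP => vX; apply: H; exists X.
  pose P := [set X : {set V} | asb (maximal_weak_hub arc X)].
  have inP : forall X, X \in P <-> maximal_weak_hub arc X.
    by move=> X; rewrite inE; split => /asbP.
  pose Xf (i : 'I_#|P|) : {set V} := enum_val i.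
  have mXf : forall i, maximal_weak_hub arc (Xf i).
    by move=> i; apply/inP; apply: enum_valP.
  have disj : forall i j v, v \in Xf i -> v \in Xf j -> i = j.
    move=> i j v vi vj; apply: enum_val_inj.
    exact: (A3 Hls (mXf i) (Hnm _ (mXf i)) (mXf j) vi vj).
  have cov : forall v, exists i, v \in Xf i.
    move=> v; have [X [mX vX]] := cover v.
    have XP : X \in P by apply/inP.
    by exists (enum_rank_in XP X); rewrite /Xf enum_rankK_in.
  have ne : forall i, exists a, a \in Xf i.
    by move=> i; case: (mXf i) => [[[/set0Pn [a aX] _] _] _]; exists a.
  have modP : forall i j a b, i != j -> a \in Xf i -> b \in Xf j -> arc a b ->
      forall a' b', a' \in Xf i -> b' \in Xf j -> arc a' b' && ~~ arc b' a'.
    move=> i j a b ij ai bj ab a' b' a'i b'j.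
    have anj : a \notin Xf j.
      by apply/negP => aj; move: ij; rewrite (disj _ _ _ ai aj) eqxx.
    have b'ni : b' \notin Xf i.
      by apply/negP => b'i; move: ij; rewrite (disj _ _ _ b'i b'j) eqxx.
    case/andP: ((A2' _ (mXf j) a anj).2 b bj ab b' b'j) => ab' _.
    exact: (A2' _ (mXf i) b' b'ni).1 a ai ab' a' a'i.
  pose R := contraction arc Xf.
  have Rall : forall i j, R i j -> forall a b, a \in Xf i -> b \in Xf j -> arc a b && ~~ arc b a.
    move=> i j /andP[ij /existsP[a0 /andP[a0i /existsP[b0 /andP[b0j ab]]]]].
    exact: modP ij a0i b0j ab.
  have Rmk : forall i j a b, a \in Xf i -> b \in Xf j -> arc a b -> i != j -> R i j.
    move=> i j a b ai bj ab ij; rewrite /R /contraction ij /=.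
    by apply/existsP; exists a; rewrite ai /=; apply/existsP; exists b; rewrite bj.
  have conR : forall i j, connect (fun a b => R a b || R b a) i j.
    move=> i j; have [a ai] := ne i; have [b bj] := ne j.
    pose part v := odflt i [pick l | v \in Xf l].
    have partP : forall v, v \in Xf (part v).
      move=> v; rewrite /part; case: pickP => [l -> // | none].
      by have [l vl] := cov v; move: (none l); rewrite vl.
    have partE : forall v l, v \in Xf l -> part v = l.
      by move=> v l vl; apply: disj (partP v) vl.
    rewrite -(partE _ _ ai) -(partE _ _ bj).
    apply: (conn_fwd (Q := fun w => connect (fun a b => R a b || R b a) (part a) (part w))
              (Hcon a b)) => // u w uw Qu.
    case E: (part u == part w); first by rewrite -(eqP E).
    apply: connect_trans Qu (connect1 _).
    case/orP: uw => [auw | awu].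
      by rewrite (Rmk _ _ _ _ (partP u) (partP w) auw (negbT E)).
    by rewrite (Rmk _ _ _ _ (partP w) (partP u) awu) ?orbT // eq_sym (negbT E).
  have cyc3 : forall a b c, R a b -> R b c -> R c a ->
      (exists u, (Xf a :|: Xf b :|: Xf c) \subset inN arc u :\: outN arc u \/
                 (Xf a :|: Xf b :|: Xf c) \subset outN arc u :\: inN arc u) -> False.
    move=> a b c Rab Rbc Rca wit.
    set Z := Xf a :|: Xf b :|: Xf c.
    have aZ : Xf a \subset Z by rewrite /Z -setUA subsetUl.
    have bZ : Xf b \subset Z by rewrite /Z -setUA setUC -setUA subsetUl.
    have cZ : Xf c \subset Z by rewrite /Z subsetUr.
    have [wa wai] := ne a; have [wb wbi] := ne b; have [wc wci] := ne c.
    have eab : eIn arc Z wa wb.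
      apply/and3P; split; [by case/andP: (Rall _ _ Rab _ _ wai wbi) | exact: (subsetP aZ) | exact: (subsetP bZ)].
    have ebc : eIn arc Z wb wc.
      apply/and3P; split; [by case/andP: (Rall _ _ Rbc _ _ wbi wci) | exact: (subsetP bZ) | exact: (subsetP cZ)].
    have eca : eIn arc Z wc wa.
      apply/and3P; split; [by case/andP: (Rall _ _ Rca _ _ wci wai) | exact: (subsetP cZ) | exact: (subsetP aZ)].
    have cn : forall i w w', Xf i \subset Z -> w \in Xf i -> w' \in Xf i ->
        connect (eIn arc Z) w w'.
      move=> i w w' iZ wi w'i; apply: connect_mono iZ _.
      by case: (mXf i) => [[[_ H] _] _]; apply: H.
    have sZ : strong_in arc Z.
      apply: (strong_hub (c := wa)); first exact: (subsetP aZ).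
      move=> w; rewrite /Z !inE => /orP[/orP[wA | wB] | wC]; split.
      - exact: cn aZ wA wai.
      - exact: cn aZ wai wA.
      - apply: connect_trans (cn _ _ _ bZ wB wbi) _.
        apply: connect_trans (connect1 ebc) _; exact: connect1 eca.
      - apply: connect_trans (connect1 eab) _; exact: cn bZ wbi wB.
      - apply: connect_trans (cn _ _ _ cZ wC wci) _; exact: connect1 eca.
      - apply: connect_trans (connect1 eab) _.
        apply: connect_trans (connect1 ebc) _; exact: cn cZ wci wC.
    have EZ : Z = Xf a by case: (mXf a) => _ H; apply: H aZ; split.
    have wbA : wb \in Xf a by rewrite -EZ (subsetP bZ).
    by case/andP: Rab; rewrite (disj _ _ _ wbA wbi) eqxx.
  have G : goodR R.
    split.
    - by move=> x; rewrite /R /contraction eqxx.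
    - move=> x y Rxy; apply/negP => Ryx.
      have [a ax] := ne x; have [b bY] := ne y.
      case/andP: (Rall _ _ Rxy _ _ ax bY) => _.
      by case/andP: (Rall _ _ Ryx _ _ bY ax) => ->.
    - move=> x a b Rxa Rxb ab.
      have [u ux] := ne x; have [wa wai] := ne a; have [wb wbi] := ne b.
      case/andP: (Rall _ _ Rxa _ _ ux wai) => ua _.
      case/andP: (Rall _ _ Rxb _ _ ux wbi) => ub _.
      have nw : wa != wb by apply/eqP => E; move: ab wbi; rewrite -E => ab wbi; rewrite (disj _ _ _ wai wbi) eqxx in ab.
      case: (Hls u) => Ho _.
      have := Ho wa wb; rewrite !inE ua ub => /(_ isT isT nw) /orP[h | h].
        by rewrite (Rmk _ _ _ _ wai wbi h ab).
      by rewrite (Rmk _ _ _ _ wbi wai h) ?orbT // eq_sym.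
    - move=> x a b Rax Rbx ab.
      have [u ux] := ne x; have [wa wai] := ne a; have [wb wbi] := ne b.
      case/andP: (Rall _ _ Rax _ _ wai ux) => au _.
      case/andP: (Rall _ _ Rbx _ _ wbi ux) => bu _.
      have nw : wa != wb by apply/eqP => E; move: ab wbi; rewrite -E => ab wbi; rewrite (disj _ _ _ wai wbi) eqxx in ab.
      case: (Hls u) => _ Hi.
      have := Hi wa wb; rewrite !inE au bu => /(_ isT isT nw) /orP[h | h].
        by rewrite (Rmk _ _ _ _ wai wbi h ab).
      by rewrite (Rmk _ _ _ _ wbi wai h) ?orbT // eq_sym.
    - move=> x a b c Rxa Rxb Rxc Rab Rbc Rca.
      apply: (cyc3 a b c Rab Rbc Rca).
      have [u ux] := ne x; exists u; right; apply/subsetP => w.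
      rewrite !inE => /orP[/orP[wA | wB] | wC].
      + by case/andP: (Rall _ _ Rxa _ _ ux wA) => -> ->.
      + by case/andP: (Rall _ _ Rxb _ _ ux wB) => -> ->.
      + by case/andP: (Rall _ _ Rxc _ _ ux wC) => -> ->.
    - move=> x a b c Rax Rbx Rcx Rab Rbc Rca.
      apply: (cyc3 a b c Rab Rbc Rca).
      have [u ux] := ne x; exists u; left; apply/subsetP => w.
      rewrite !inE => /orP[/orP[wA | wB] | wC].
      + by case/andP: (Rall _ _ Rax _ _ wA ux) => -> ->.
      + by case/andP: (Rall _ _ Rbx _ _ wB ux) => -> ->.
      + by case/andP: (Rall _ _ Rcx _ _ wC ux) => -> ->.
  exists #|P|, Xf; split.
  - rewrite leqNgt; apply/negP => k1.
    have [i0 _] := cov v0.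
    have all0 : forall i j : 'I_#|P|, i = j.
      move=> i j; apply: val_inj => /=.
      by move: (ltn_ord i) (ltn_ord j) k1; case: (nat_of_ord i) => [|?]; case: (nat_of_ord j) => [|?] //;
        case: #|P| => [|[|?]].
    case: (mXf i0) => [[_ [x wx]] _].
    have [l xl] := cov x; rewrite (all0 l i0) in xl.
    case: wx => /subsetP/(_ x xl); rewrite !inE => /andP[_ h];
      by move: (Hl x); rewrite h.
  - split.
      move=> i j ij; rewrite disjoint_subset; apply/subsetP => v vi.
      rewrite !inE; apply/negP => vj.
      by move: ij; rewrite (disj _ _ _ vi vj) eqxx.
    exact: cov.
  - by move=> i; case: (mXf i) => [[]].
  - exact: roundB G conR.
Qed.
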